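(* Let $p\ge 2$, $\alpha=p-1$, $0<R<\infty$, $\theta\ge\alpha$, $0\le\nu<\lambda_{\alpha,\theta}$. For each $\varepsilon\in(0,\mu_{\alpha,\theta})$ let $u_\varepsilon\in X^{1,p}_R(\alpha,\theta)\cap C^1[0,R]$ be nonnegative and nonincreasing with $H_\nu(u_\varepsilon)=1$ and $\int_0^R e^{\mu_\varepsilon u_\varepsilon^{p/(p-1)}}\mathrm d\lambda_\theta=S_\varepsilon(p,\nu,\theta,R)$, and let $\lambda_\varepsilon=\int_0^R e^{\mu_\varepsilon u_\varepsilon^{p/(p-1)}}u_\varepsilon^{p/(p-1)}\mathrm d\lambda_\theta$. Suppose that along a sequence $\varepsilon\to0$ we have $u_\varepsilon\to0$ in $L^q_\theta$ for every $q>1$ and $a_\varepsilon:=u_\varepsilon(0)\to+\infty$. Define $r_\varepsilon>0$ by $$r_\varepsilon^{\theta+1}=\frac{\lambda_\varepsilon}{a_\varepsilon^{\frac p{p-1}}e^{\mu_\varepsilon a_\varepsilon^{\frac p{p-1}}}}.$$ Then for every $\eta<\mu_{\alpha,\theta}$, $r_\varepsilon^{\theta+1}a_\varepsilon^{\frac p{p-1}}e^{\eta a_\varepsilon^{\frac p{p-1}}}\to0$ as $\varepsilon\to0$. In particular $r_\varepsilon^{\theta+1}\to0$.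
   Context: For $s\ge 0$ let $\omega_s=\frac{2\pi^{s/2}}{\Gamma(s/2)}$ and let $\mathrm d\lambda_s=\omega_s r^s\,\mathrm dr$ on $(0,R)$; $L^q_s=L^q((0,R),\mathrm d\lambda_s)$. The space $X^{1,p}_R(\alpha,\theta)$ is the completion of the set of all $u\in AC_{loc}(0,R)$ with $\lim_{r\to R}u(r)=0$, $u\in L^p_\theta$, $u'\in L^p_\alpha$, with respect to the norm $\|u\|=(\|u\|^p_{L^p_\theta}+\|u'\|^p_{L^p_\alpha})^{1/p}$. Set $\mu_{\alpha,\theta}=(\theta+1)\omega_\alpha^{1/\alpha}$, $\lambda_{\alpha,\theta}=\inf_{u\in X^{1,p}_R(\alpha,\theta)\setminus\{0\}}\|u'\|^p_{L^p_\alpha}/\|u\|^p_{L^p_\theta}$, and $H_\nu(u)=(\|u'\|^p_{L^p_\alpha}-\nu\|u\|^p_{L^p_\theta})^{1/p}$. Let $\mu_\varepsilon=\mu_{\alpha,\theta}-\varepsilon$ and $S_\varepsilon(p,\nu,\theta,R)=\sup_{u\in X^{1,p}_R(\alpha,\theta),\,H_\nu(u)\le1}\int_0^R e^{\mu_\varepsilon|u|^{p/(p-1)}}\mathrm d\lambda_\theta$. *)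

(* Defs.v *)
From HB Require Import structures.
From mathcomp Require Import all_boot all_order all_algebra.
From mathcomp Require Import all_classical all_reals all_analysis.
Set Implicit Arguments. Unset Strict Implicit. Unset Printing Implicit Defensive.
Import Order.TTheory GRing.Theory Num.Theory.
Import numFieldNormedType.Exports.
Local Open Scope classical_set_scope.
Local Open Scope ring_scope.

Section defs.
Variable R : realType.

Definition Gamma (x : R) : R :=
  fine (\int[@lebesgue_measure R]_(t in `]0%R, +oo[) (t `^ (x - 1) * expR (- t))%:E)%E.

Definition omega (s : R) : R := 2 * pi `^ (s / 2) / Gamma (s / 2).

(* integral of f over (0,Rr) against d lambda_s = omega_s r^s dr *)
Definition lam_int (s Rr : R) (f : R -> R) : \bar R :=
  (\int[@lebesgue_measure R]_(x in `]0%R, Rr[) (f x * (omega s * x `^ s))%:E)%E.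

Definition LpPow (s Rr q : R) (u : R -> R) : \bar R :=
  lam_int s Rr (fun x => `|u x| `^ q).

Definition abs_cont (u : R -> R) (a b : R) : Prop :=
  forall e : R, 0 < e -> exists2 d : R, 0 < d &
    forall (n : nat) (l r : nat -> R),
      (forall i, (i < n)%N -> a <= l i /\ l i < r i /\ r i <= b) ->
      (forall i j, (i < j < n)%N -> r i <= l j \/ r j <= l i) ->
      \sum_(i < n) (r i - l i) < d ->
      \sum_(i < n) `|u (r i) - u (l i)| < e.

Definition AC_loc (u : R -> R) (Rr : R) : Prop :=
  forall a b : R, 0 < a -> a < b -> b < Rr -> abs_cont u a b.

(* the generating set of X^{1,p}_R(alpha,theta); u' is taken as derive1 u
   (the a.e. derivative of an AC_loc function) *)
Definition in_X0 (p alpha theta Rr : R) (u : R -> R) : Prop :=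
  [/\ AC_loc u Rr,
      u x @[x --> Rr^'-] --> 0,
      (LpPow theta Rr p u < +oo)%E &
      (LpPow alpha Rr p (derive1 u) < +oo)%E].

Definition Hnu (p alpha theta Rr nu : R) (u : R -> R) : R :=
  (fine (LpPow alpha Rr p (derive1 u)) - nu * fine (LpPow theta Rr p u)) `^ (1 / p).

Definition lambda_at (p alpha theta Rr : R) : R :=
  inf [set fine (LpPow alpha Rr p (derive1 u)) / fine (LpPow theta Rr p u) | u in
        [set u | in_X0 p alpha theta Rr u /\
                 exists2 x, 0 < x < Rr & u x != 0]].

Definition mu_at (alpha theta : R) : R := (theta + 1) * omega alpha `^ (1 / alpha).

Definition S_eps (p nu theta Rr eps : R) : \bar R :=
  ereal_sup [set lam_int theta Rr
                   (fun x => expR ((mu_at (p - 1) theta - eps) * `|u x| `^ (p / (p - 1))))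
            | u in [set u | in_X0 p (p - 1) theta Rr u /\ Hnu p (p - 1) theta Rr nu u <= 1]].

Definition C1_on (u : R -> R) (a b : R) : Prop :=
  [/\ {within `[a, b], continuous u},
      (forall x, a < x < b -> derivable u x 1) &
      exists2 g : R -> R, {within `[a, b], continuous g} &
        forall x, a < x < b -> derive1 u x = g x].

End defs.

(* Main.v *)
Require Import Defs.
From HB Require Import structures.
From mathcomp Require Import all_boot all_order all_algebra.
From mathcomp Require Import all_classical all_reals all_analysis.
From mathcomp Require Import measurable_realfun.
From mathcomp Require Import ring lra.
Import Order.TTheory GRing.Theory Num.Theory.
Import numFieldNormedType.Exports.
Local Open Scope classical_set_scope.
Local Open Scope ring_scope.

Lemma meas_int (R : realType) (Rr th c : R) (h f : R -> R) :
  measurable_fun setT h -> measurable_fun `]0, Rr[ f ->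
  measurable_fun `]0, Rr[ (fun x => (h (f x) * (c * x `^ th))%:E).
Proof.
move=> mh mf; apply/measurable_EFinP; apply: measurable_funM.
  exact: measurableT_comp.
apply: measurable_funM; first exact: measurable_cst.
by apply: measurable_funTS; exact: measurable_powR.
Qed.

Lemma omega_ge0 (R : realType) (s : R) : 0 <= omega s.
Proof.
rewrite /omega divr_ge0 ?mulr_ge0 ?powR_ge0 //.
rewrite /Gamma fine_ge0 // integral_ge0 // => x _.
by rewrite lee_fin mulr_ge0 ?powR_ge0 ?expR_ge0.
Qed.

Lemma key_ineq (R : realType) (eta d M t : R) : 0 < d -> 0 <= M -> 0 <= t ->
  expR (eta * t) * t <= expR (`|eta| * M) * t + (2 / d) * expR (- (d * M / 2)) * expR ((eta + d) * t).
Proof.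
move=> d0 M0 t0.
have [tM|Mt] := leP t M.
  rewrite -[X in X <= _]addr0 lerD //; last by rewrite !mulr_ge0 ?expR_ge0 ?invr_ge0 // ltW.
  rewrite ler_wpM2r // ler_expR (le_trans (ler_norm _)) // normrM (ger0_norm t0).
  by rewrite ler_wpM2l.
rewrite -[X in X <= _]add0r lerD //; first by rewrite mulr_ge0 ?expR_ge0.
have e1 : expR (eta * t) = expR ((eta + d) * t) * expR (- (d * t)).
  by rewrite -expRD; congr expR; ring.
rewrite e1 -mulrA [X in _ <= X]mulrC.
rewrite ler_wpM2l ?expR_ge0 //.
have h1 : t <= 2 / d * expR (d * t / 2).
  have h := expR_ge1Dx (d * t / 2).
  have ht : t = 2 / d * (d * t / 2) by field; rewrite gt_eqF.
  rewrite [X in X <= _]ht ler_wpM2l ?divr_ge0 ?ltW //.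
  lra.
apply: le_trans (ler_wpM2l (expR_ge0 _) h1) _.
have d2 : 0 <= 2 / d by rewrite divr_ge0 // ltW.
rewrite mulrCA ler_wpM2l //.
rewrite -expRD ler_expR.
have : d * M <= d * t by rewrite ler_wpM2l ?ltW.
lra.
Qed.

Lemma lam_int_ge0 (R : realType) (s Rr : R) (f : R -> R) :
  (forall x, 0 < x < Rr -> 0 <= f x) -> (0 <= lam_int s Rr f)%E.
Proof.
move=> f0; rewrite /lam_int; apply: integral_ge0 => x; rewrite /= in_itv /= => /f0 hx.
by rewrite lee_fin; apply: mulr_ge0 => //; apply: mulr_ge0; [exact: omega_ge0|exact: powR_ge0].
Qed.

Lemma fine_le_self (R : realType) (x : \bar R) : (0 <= x)%E -> ((fine x)%:E <= x)%E.
Proof. by case: x. Qed.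

Lemma powR_le (R : realType) (r x y : R) : 0 <= r -> 0 <= x -> x <= y -> x `^ r <= y `^ r.
Proof.
move=> r0 x0 xy; apply: (ge0_ler_powR r0) => //; rewrite nnegrE //.
exact: le_trans xy.
Qed.

Lemma mh1 (R : realType) (k q : R) : measurable_fun setT (fun s : R => expR (k * s `^ q)).
Proof.
apply: (@measurableT_comp _ _ _ _ _ _ expR _ (fun s : R => k * s `^ q)).
  exact: measurable_expR.
by apply: measurable_funM; [exact: measurable_cst|exact: measurable_powR].
Qed.

Lemma mh2 (R : realType) (k q : R) :
  measurable_fun setT (fun s : R => expR (k * s `^ q) * s `^ q).
Proof. by apply: measurable_funM; [exact: mh1|exact: measurable_powR]. Qed.

Lemma mh3 (R : realType) (q : R) : measurable_fun setT (fun s : R => `|s| `^ q).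
Proof.
apply: (@measurableT_comp _ _ _ _ _ _ (@powR R ^~ q) _ (fun s : R => `|s|)).
  exact: measurable_powR.
exact: normr_measurable.
Qed.

Theorem lemma3p3 (R : realType) (p Rr theta nu : R) (eps : nat -> R)
  (u : nat -> R -> R) :
  2 <= p -> 0 < Rr -> p - 1 <= theta -> 0 <= nu ->
  nu < lambda_at p (p - 1) theta Rr ->
  (forall n, 0 < eps n < mu_at (p - 1) theta) ->
  eps n @[n --> \oo] --> 0 ->
  (forall n, in_X0 p (p - 1) theta Rr (u n)) ->
  (forall n, C1_on (u n) 0 Rr) ->
  (forall n x, 0 <= x <= Rr -> 0 <= u n x) ->
  (forall n x y, 0 <= x -> x <= y -> y <= Rr -> u n y <= u n x) ->
  (forall n, Hnu p (p - 1) theta Rr nu (u n) = 1) ->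
  (forall n, lam_int theta Rr
       (fun x => expR ((mu_at (p - 1) theta - eps n) * u n x `^ (p / (p - 1))))
     = S_eps p nu theta Rr (eps n)) ->
  (forall q : R, 1 < q -> (LpPow theta Rr q (u n) @[n --> \oo] --> 0%E)) ->
  u n 0 @[n --> \oo] --> +oo ->
  let lam n := fine (lam_int theta Rr
       (fun x => expR ((mu_at (p - 1) theta - eps n) * u n x `^ (p / (p - 1)))
                 * u n x `^ (p / (p - 1)))) in
  let a n := u n 0 in
  let r n := (lam n / (a n `^ (p / (p - 1))
                 * expR ((mu_at (p - 1) theta - eps n) * a n `^ (p / (p - 1)))))
               `^ (1 / (theta + 1)) in
  (forall eta : R, eta < mu_at (p - 1) theta ->
     r n `^ (theta + 1) * a n `^ (p / (p - 1)) * expR (eta * a n `^ (p / (p - 1)))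
       @[n --> \oo] --> 0) /\
  r n `^ (theta + 1) @[n --> \oo] --> 0.
Proof.
move=> hp hR hth hnu _ heps eps0 X0 C1 u0 umon H1 Smax Lq ainf lam a r.
set mu := mu_at (p - 1) theta.
set q := p / (p - 1).
have p1 : 0 < p - 1 by lra.
have q1 : 1 < q.
  by rewrite /q ltr_pdivlMr // mul1r ltrBlDr ltrDl ltr01.
have q0 : 0 < q := lt_trans ltr01 q1.
have th0 : 0 <= theta by lra.
have mu0 : 0 < mu by case/andP: (heps 0%N) => h1 h2; exact: lt_trans h1 h2.
set D := (`]0, Rr[%classic : set R).
have mD : measurable D by exact: measurable_itv.
have mun n : measurable_fun D (u n).
  case: (C1 n) => cu _ _.
  apply: (measurable_funS _ _ (subspace_continuous_measurable_fun _ cu)).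
  - exact: measurable_itv.
  - exact: subset_itv_oo_cc.
  - exact: measurable_itv.
have uD n x : D x -> 0 <= u n x <= a n.
  rewrite /D /= in_itv /= => /andP[x0 xR].
  by rewrite u0 ?umon ?(ltW x0) ?(ltW xR) //= ltW.
have a0 n : 0 <= a n by rewrite /a u0 // lexx ltW.
have main : forall eta, eta < mu ->
    (fun n => r n `^ (theta + 1) * a n `^ q * expR (eta * a n `^ q)) @ \oo --> 0.
  move=> eta he.
  have [N0 hN0] : exists N, eps N < mu - eta.
    have : \forall n \near \oo, eps n < mu - eta.
      move/cvgrPdist_lt : eps0 => /(_ (mu - eta)); rewrite subr_gt0 => /(_ he).
      apply: filterS => n; rewrite sub0r normrN => h; exact: le_lt_trans (ler_norm _) h.
    by case => N _ hN; exists N; apply: hN => /=.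
  set e0 := mu - eps N0.
  have he0 : eta < e0 by rewrite /e0; clear -hN0; lra.
  set d := e0 - eta.
  have d0 : 0 < d by rewrite /d subr_gt0.
  have e0pos : 0 < e0 by rewrite /e0 subr_gt0; case/andP: (heps N0).
  pose K n := lam_int theta Rr (fun x => expR (e0 * u n x `^ q)).
  have KS n : (K n <= K N0)%E.
    rewrite {2}/K.
    have -> : lam_int theta Rr (fun x => expR (e0 * u N0 x `^ q)) = S_eps p nu theta Rr (eps N0) by exact: Smax.
    apply: ereal_sup_ubound; exists (u n); first by split; [exact: X0|rewrite H1].
    rewrite /lam_int; apply: eq_integral => x; rewrite inE /= => xD.
    by rewrite ger0_norm //; case/andP: (uD n x xD).
  have Kfin : (K N0 < +oo)%E.
    set c := expR (e0 * a N0 `^ q) * (omega theta * Rr `^ theta).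
    apply: (@le_lt_trans _ _ (c * Rr)%:E); last exact: ltry.
    have -> : ((c * Rr)%:E = \int[lebesgue_measure]_(x in D) (cst c%:E) x)%E.
      rewrite integral_cst // EFinM; congr (_ * _)%E; apply/esym.
      by rewrite /D; etransitivity; first exact: (lebesgue_measure_itv `]0, Rr[%R); rewrite /= lte_fin hR sube0.
    rewrite /K /lam_int; apply: ge0_le_integral => //.
    - move=> x xD; case/andP: (uD N0 x xD) => ux _.
      rewrite lee_fin; apply: mulr_ge0; first exact: expR_ge0.
      by apply: mulr_ge0; [exact: omega_ge0|exact: powR_ge0].
    - apply: (@meas_int R Rr theta (omega theta) (fun s => expR (e0 * s `^ q)) (u N0)) => //.
      apply: measurableT_comp; first exact: measurable_expR.
      by apply: measurable_funM; [exact: measurable_cst|exact: measurable_powR].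
    - move=> x xD; case/andP: (uD N0 x xD) => ux1 ux2.
      move: xD; rewrite /D /= in_itv /= => /andP[x0 xR].
      rewrite lee_fin /c; apply: ler_pM.
      + exact: expR_ge0.
      + by apply: mulr_ge0; [exact: omega_ge0|exact: powR_ge0].
      + by rewrite ler_expR ler_wpM2l ?(ltW e0pos) // powR_le // ltW.
      + by rewrite ler_wpM2l ?omega_ge0 // powR_le // ltW.
  set C := fine (K N0).
  have KC n : (K n <= C%:E)%E.
    rewrite /C fineK; first exact: KS.
    by rewrite ge0_fin_numE // /K lam_int_ge0 // => x _; exact: expR_ge0.
  have C0 : 0 <= C by rewrite /C fine_ge0 // /K lam_int_ge0 // => x _; exact: expR_ge0.
  have heps' : \forall n \near \oo, eps n < mu - eta.
    move/cvgrPdist_lt : eps0 => /(_ (mu - eta)); rewrite subr_gt0 => /(_ he).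
    apply: filterS => n; rewrite sub0r normrN => h; exact: le_lt_trans (ler_norm _) h.
  apply/cvgrPdist_le => e epos.
  set z := 4 * (C + 1) / (d * e).
  have Cp1 : 0 < C + 1 by rewrite ltr_wpDl.
  have z0 : 0 < z by rewrite /z divr_gt0 ?mulr_gt0.
  set M := 2 / d * `|ln z|.
  have M0 : 0 <= M by rewrite /M mulr_ge0 // divr_ge0 // ltW.
  set A := expR (`|eta| * M).
  have A0 : 0 < A by exact: expR_gt0.
  set K' := 2 / d * expR (- (d * M / 2)).
  have K'0 : 0 <= K' by rewrite /K' mulr_ge0 ?expR_ge0 // divr_ge0 // ltW.
  have K'C : K' * C <= e / 2.
    have hexp : expR (- (d * M / 2)) <= z^-1.
      have -> : d * M / 2 = `|ln z| by rewrite /M; field; rewrite gt_eqF.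
      rewrite -[z in z^-1](lnK z0) -expRN ler_expR lerN2; exact: ler_norm.
    have h2 : 2 / d * z^-1 = e / (2 * (C + 1)).
      by rewrite /z; field; rewrite (gt_eqF Cp1) (gt_eqF epos) (gt_eqF d0).
    have h3 : K' * C <= 2 / d * z^-1 * C.
      by rewrite ler_wpM2r // /K' ler_wpM2l // divr_ge0 // ltW.
    apply: le_trans h3 _.
    rewrite h2.
    have -> : e / (2 * (C + 1)) * C = e / 2 * (C / (C + 1)) by field; rewrite gt_eqF.
    apply: ler_piMr; first by rewrite divr_ge0 // ltW.
    by rewrite ler_pdivrMr // mul1r lerDl.
  move/fine_cvgP : (Lq q q1) => [Lfin Lcvg].
  have hLe := (cvgrPdist_lt _ _).1 Lcvg (e / (2 * A)) (divr_gt0 epos (mulr_gt0 (ltr0Sn R 1) A0)).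
  near=> n.
  have Lfinn : LpPow theta Rr q (u n) \is a fin_num by near: n; exact: Lfin.
  have Lsm : `|0 - fine (LpPow theta Rr q (u n))| < e / (2 * A) by near: n; exact: hLe.
  have en : eps n < mu - eta by near: n; exact: heps'.
  set T := a n `^ q.
  set mn := mu - eps n.
  have hmun : eta <= mn by rewrite /mn; clear -en; lra.
  pose w x := omega theta * x `^ theta.
  have w0 x : 0 <= w x by rewrite /w; apply: mulr_ge0; [exact: omega_ge0|exact: powR_ge0].
  pose F1 x := (expR (mn * u n x `^ q) * u n x `^ q * w x)%:E.
  pose G1 x := (`|u n x| `^ q * w x)%:E.
  pose G2 x := (expR (e0 * u n x `^ q) * w x)%:E.
  set I := lam_int theta Rr (fun x => expR (mn * u n x `^ q) * u n x `^ q).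
  have I0 : (0 <= I)%E.
    rewrite /I lam_int_ge0 // => x hx; apply: mulr_ge0; [exact: expR_ge0|exact: powR_ge0].
  have mF1 : measurable_fun D F1 := @meas_int R Rr theta (omega theta) _ (u n) (mh2 R mn q) (mun n).
  have mG1 : measurable_fun D G1 := @meas_int R Rr theta (omega theta) _ (u n) (mh3 R q) (mun n).
  have mG2 : measurable_fun D G2 := @meas_int R Rr theta (omega theta) _ (u n) (mh1 R e0 q) (mun n).
  have F10 x : D x -> (0 <= F1 x)%E.
    move=> _; rewrite lee_fin; apply: mulr_ge0 => //; apply: mulr_ge0; [exact: expR_ge0|exact: powR_ge0].
  have G10 x : D x -> (0 <= G1 x)%E.
    move=> _; rewrite lee_fin; apply: mulr_ge0 => //; exact: powR_ge0.
  have G20 x : D x -> (0 <= G2 x)%E.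
    move=> _; rewrite lee_fin; apply: mulr_ge0 => //; exact: expR_ge0.
  set c := expR ((eta - mn) * T).
  have c0 : 0 <= c by exact: expR_ge0.
  have A0' : 0 <= A by exact: ltW.
  have Ibound : (c%:E * I <= A%:E * LpPow theta Rr q (u n) + K'%:E * K n)%E.
    have -> : I = (\int[lebesgue_measure]_(x in D) F1 x)%E by [].
    have -> : LpPow theta Rr q (u n) = (\int[lebesgue_measure]_(x in D) G1 x)%E by [].
    have -> : K n = (\int[lebesgue_measure]_(x in D) G2 x)%E by [].
    rewrite -!ge0_integralZl_EFin // -ge0_integralD //.
    all: try (by move=> x xD; apply: mule_ge0; [rewrite lee_fin | first [exact: F10 xD | exact: G10 xD | exact: G20 xD]]).
    all: try (exact: measurable_funeM).
    apply: ge0_le_integral => //.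
    all: try (by move=> x xD; apply: mule_ge0; [rewrite lee_fin | first [exact: F10 xD | exact: G10 xD | exact: G20 xD]]).
    all: try (exact: measurable_funeM).
    all: try (by apply: emeasurable_funD; exact: measurable_funeM).
    move=> x xD; rewrite /F1 /G1 /G2 -!EFinM -EFinD lee_fin.
    have W0 := w0 x; move: W0; set W := w x => W0; clearbody W.
    case/andP: (uD n x xD) => ux1 ux2.
    set t := u n x `^ q.
    have t0 : 0 <= t by exact: powR_ge0.
    have tT : t <= T by rewrite /t /T powR_le // ltW.
    rewrite ger0_norm // -/t.
    have h1 : c * expR (mn * t) <= expR (eta * t).
      rewrite /c -expRD ler_expR.
      have : (mn - eta) * (t - T) <= 0 by rewrite mulr_ge0_le0 // ?subr_ge0 // subr_le0.
      clear; move=> h; nra.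
    have h2 := @key_ineq R eta d M t d0 M0 t0.
    have ed : eta + d = e0 by rewrite /d addrC subrK.
    rewrite ed in h2.
    have h3 : c * (expR (mn * t) * t * W) <= expR (eta * t) * t * W.
      by rewrite !mulrA ler_wpM2r // ler_wpM2r.
    apply: le_trans h3 _.
    rewrite [A * _]mulrA [K' * _]mulrA -mulrDl ler_wpM2r //.
  have lamI : lam n = fine I by [].
  have rE : r n `^ (theta + 1) = lam n / (T * expR (mn * T)).
    rewrite /r -powRrM div1r mulVf ?powRr1 //.
      by rewrite divr_ge0 ?mulr_ge0 ?powR_ge0 ?expR_ge0 // lamI fine_ge0.
    by rewrite gt_eqF // ltr_wpDl.
  have Xle : r n `^ (theta + 1) * T * expR (eta * T) <= fine I * c.
    rewrite rE -lamI.
    have T0 : 0 <= T by exact: powR_ge0.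
    case: (eqVneq T 0) => [->|Tn0]; first by rewrite mulr0 mul0r mulr_ge0 // lamI fine_ge0.
    have -> : c = expR (eta * T) / expR (mn * T) by rewrite /c mulrBl expRB.
    suff -> : lam n / (T * expR (mn * T)) * T * expR (eta * T) =
      lam n * (expR (eta * T) / expR (mn * T)) by [].
    by field; rewrite Tn0 expR_eq0.
  have Xp : 0 <= r n `^ (theta + 1) * T * expR (eta * T).
    by rewrite mulr_ge0 ?mulr_ge0 ?powR_ge0 ?expR_ge0.
  rewrite sub0r normrN ger0_norm //.
  rewrite -lee_fin; apply: (le_trans (y := ((fine I * c)%:E))); first by rewrite lee_fin.
  rewrite EFinM muleC.
  apply: (le_trans (y := (c%:E * I)%E)); first by rewrite lee_wpmul2l ?lee_fin // fine_le_self.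
  apply: le_trans Ibound _.
  have Lle : (LpPow theta Rr q (u n) <= (e / (2 * A))%:E)%E.
    rewrite -(fineK Lfinn) lee_fin; rewrite sub0r normrN in Lsm.
    exact: le_trans (ler_norm _) (ltW Lsm).
  apply: (le_trans (y := (A%:E * (e / (2 * A))%:E + K'%:E * C%:E)%E)).
    by apply: leeD; apply: lee_wpmul2l; rewrite ?lee_fin.
  rewrite -!EFinM -EFinD lee_fin.
  have -> : A * (e / (2 * A)) = e / 2 by field; rewrite gt_eqF.
  clear -K'C; lra.
split; first exact: main.
have h0 := main 0 mu0.
have a1 : \forall n \near \oo, 1 <= a n.
  by move/cvgryPger : ainf => /(_ 1); apply; rewrite num_real.
apply/cvgrPdist_le => e epos.
have he := (cvgrPdist_le _ _).1 h0 e epos.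
near=> n.
have an : 1 <= a n by near: n; exact: a1.
have hn : `|0 - r n `^ (theta + 1) * a n `^ q * expR (0 * a n `^ q)| <= e.
  by near: n; exact: he.
rewrite mul0r expR0 mulr1 !sub0r !normrN in hn *.
apply: le_trans hn.
rewrite !ger0_norm ?mulr_ge0 ?powR_ge0 //.
rewrite ler_peMr ?powR_ge0 //.
have -> : 1 = 1 `^ q by rewrite powR1.
by rewrite powR_le // ltW.
Unshelve. all: by end_near.
Qed.
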